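(* Let $T=T((v_1,k_1),\dots,(v_l,k_l);p)$ and $S=T((v_1,k_1),\dots,(v_l,k_l);q)$ be two trees of diameter 4. Then there exists a non-negative integer $r$ such that $\mathbb{G}(R)$, where $R=T((v_1,k_1),\dots,(v_l,k_l);r)$, is isomorphic to a finite index subgroup of $\mathbb{G}(S)$ and to a finite index subgroup of $\mathbb{G}(T)$. In particular, $\mathbb{G}(S)$ and $\mathbb{G}(T)$ are commensurable.
   Context: For a finite simplicial graph $\Gamma$, $\mathbb{G}(\Gamma)$ is the right-angled Artin group with generators the vertices of $\Gamma$ and relations $[u,v]=1$ for each edge. Two groups are commensurable if they have isomorphic finite index subgroups. Encoding of trees of diameter 4: in a finite tree of diameter 4 the middle vertex of any path of length 4 is the same vertex $c$, the center; leaves adjacent to $c$ are hair vertices; other neighbours of $c$ are pivots. $T((d_1,k_1),\dots,(d_l,k_l);q)$ is the tree of diameter 4 with exactly $q\ge0$ hair vertices and, for each $i$, exactly $k_i$ pivots adjacent to exactly $d_i$ leaves, where $l,d_i,k_i$ are positive integers, $d_1<\dots<d_l$, and either $l\ge2$ or ($l=1$ and $k_1\ge2$). *)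

(* Defs.v *)
From Stdlib Require List.
From mathcomp Require Import all_boot.
Set Implicit Arguments. Unset Strict Implicit. Unset Printing Implicit Defensive.

(* Given a vertex type V and a (symmetric) adjacency relation E, the RAAG  *)
(* G(V,E) is the quotient of the free monoid on letters (x, true) = x and  *)
(* (x, false) = x^-1 by the congruence generated by free cancellation      *)
(* x^e x^-e = 1 and commutation x^b y^c = y^c x^b for E x y.               *)

Definition word (V : Type) := list (V * bool).

Inductive raag_eq (V : Type) (E : V -> V -> Prop) : word V -> word V -> Prop :=
| re_refl w : raag_eq E w w
| re_sym u v : raag_eq E u v -> raag_eq E v u
| re_trans u v w : raag_eq E u v -> raag_eq E v w -> raag_eq E u w
| re_cancel (u v : word V) (x : V) (b : bool) :
    raag_eq E (u ++ (x, b) :: (x, ~~ b) :: v) (u ++ v)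
| re_comm (u v : word V) (x y : V) (b c : bool) :
    E x y -> raag_eq E (u ++ (x, b) :: (y, c) :: v) (u ++ (y, c) :: (x, b) :: v).

(* Group operations on words: product is concatenation, unit is [::]. *)

Definition fi_embedding (V1 V2 : Type) (E1 : V1 -> V1 -> Prop)
    (E2 : V2 -> V2 -> Prop) (phi : word V1 -> word V2) : Prop :=
  (forall u v, raag_eq E1 u v -> raag_eq E2 (phi u) (phi v)) /\
  (forall u v, raag_eq E2 (phi (u ++ v)) (phi u ++ phi v)) /\
  (forall u v, raag_eq E2 (phi u) (phi v) -> raag_eq E1 u v) /\
  (* image has finitely many left cosets *)
  (exists cs : list (word V2), forall w : word V2,
      exists c, List.In c cs /\ exists u, raag_eq E2 w (c ++ phi u)).

(* Trees of diameter 4: T((d_1,k_1),...,(d_l,k_l); q).                    *)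
(* The data (d_i,k_i) is a list s of pairs; q is the number of hairs.     *)
(* Vertices: the center, hairs h < q, pivots (i,j) with i < l, j < k_i,   *)
(* and leaves (i,j,m) with m < d_i attached to pivot (i,j).               *)

Inductive tvert :=
| TCenter
| THair of nat
| TPivot of nat & nat
| TLeaf of nat & nat & nat.

Definition tvalid (s : seq (nat * nat)) (q : nat) (v : tvert) : bool :=
  match v with
  | TCenter => true
  | THair h => h < q
  | TPivot i j => (i < size s) && (j < (nth (0, 0) s i).2)
  | TLeaf i j m => [&& i < size s, j < (nth (0, 0) s i).2 & m < (nth (0, 0) s i).1]
  end.

Definition tree_vertex (s : seq (nat * nat)) (q : nat) := {v : tvert | tvalid s q v}.

Definition tadj_raw (v w : tvert) : Prop :=
  match v, w with
  | TCenter, THair _ => True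
  | TCenter, TPivot _ _ => True
  | TPivot i j, TLeaf i' j' _ => i = i' /\ j = j'
  | _, _ => False
  end.

Definition tree_adj (s : seq (nat * nat)) (q : nat) (v w : tree_vertex s q) : Prop :=
  tadj_raw (proj1_sig v) (proj1_sig w) \/ tadj_raw (proj1_sig w) (proj1_sig v).

Definition diam4_data (s : seq (nat * nat)) : bool :=
  [&& all (fun dk => (0 < dk.1) && (0 < dk.2)) s,
      sorted ltn (map fst s) &
      (2 <= size s) || ((size s == 1) && (2 <= (nth (0, 0) s 0).2))].

(* Main.v *)
Require Import Defs.
From mathcomp Require Import all_boot.
Set Implicit Arguments. Unset Strict Implicit. Unset Printing Implicit Defensive.

Section Generic.
Variable V : Type.
Variable E : V -> V -> Prop.
Local Notation req := (raag_eq E).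

Definition flip (x : V * bool) := (x.1, ~~ x.2).
Definition winv (w : word V) : word V := rev (map flip w).

Lemma winv_cat u v : winv (u ++ v) = winv v ++ winv u.
Proof. by rewrite /winv map_cat rev_cat. Qed.
Lemma winvK w : winv (winv w) = w.
Proof. rewrite /winv map_rev revK -map_comp; elim: w => //= -[a b] w ->; by rewrite /flip /= negbK. Qed.
Lemma winv_cons x w : winv (x :: w) = winv w ++ [:: flip x].
Proof. by rewrite -cat1s winv_cat. Qed.
Lemma winv_nil : winv [::] = [::]. Proof. by []. Qed.

Lemma req_catl w u v : req u v -> req (w ++ u) (w ++ v).
Proof.
elim=> {u v} [u|u v _ IH|u v x _ IH1 _ IH2|u v x b|u v x y b c Exy].
- exact: re_refl.
- exact: re_sym.
- exact: re_trans IH2.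
- rewrite !catA; exact: re_cancel.
- rewrite !catA; exact: re_comm.
Qed.
Lemma req_catr w u v : req u v -> req (u ++ w) (v ++ w).
Proof.
elim=> {u v} [u|u v _ IH|u v x _ IH1 _ IH2|u v x b|u v x y b c Exy].
- exact: re_refl.
- exact: re_sym.
- exact: re_trans IH2.
- rewrite -!catA /=; exact: re_cancel.
- rewrite -!catA /=; exact: re_comm.
Qed.
Lemma req_cat u u' v v' : req u u' -> req v v' -> req (u ++ v) (u' ++ v').
Proof. move=> H1 H2; apply: re_trans (req_catr _ H1) (req_catl _ H2). Qed.
Lemma req_canc x : req [:: x; flip x] [::].
Proof. case: x => a b; have := @re_cancel V E [::] [::] a b; by []. Qed.
Lemma req_canc' x : req [:: flip x; x] [::].
Proof. case: x => a b; have := @re_cancel V E [::] [::] a (~~ b); by rewrite negbK. Qed.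
Lemma req_invr w : req (w ++ winv w) [::].
Proof.
elim: w => [|x w IH] /=; first exact: re_refl.
rewrite winv_cons catA.
apply: (re_trans (v := x :: [::] ++ [:: flip x])); last exact: req_canc.
apply: (req_catl [:: x]); apply: req_catr; exact: IH.
Qed.
Lemma req_invl w : req (winv w ++ w) [::].
Proof. have := req_invr (winv w); by rewrite winvK. Qed.
Lemma req_winv (Esym : forall x y, E x y -> E y x) u v : req u v -> req (winv u) (winv v).
Proof.
elim=> {u v} [u|u v _ IH|u v x _ IH1 _ IH2|u v x b|u v x y b c Exy].
- exact: re_refl.
- exact: re_sym.
- exact: re_trans IH2.
- rewrite !winv_cat !winv_cons -!catA /=; rewrite /flip /=; rewrite (negbK b); exact: re_cancel.
- rewrite !winv_cat !winv_cons -!catA /=; apply: re_comm; exact: Esym.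
Qed.
Lemma req_elim_l u w v : req (u ++ winv w ++ w ++ v) (u ++ v).
Proof. apply: req_catl; rewrite catA -{2}(cat0s v); apply: req_catr; exact: req_invl. Qed.
Lemma req_elim_r u w v : req (u ++ w ++ winv w ++ v) (u ++ v).
Proof. apply: req_catl; rewrite catA -{2}(cat0s v); apply: req_catr; exact: req_invr. Qed.

Lemma req_comm1 x v : (forall y, List.In y v -> E x.1 y.1) -> req (x :: v) (v ++ [:: x]).
Proof.
elim: v => [|y v IH] H /=; first exact: re_refl.
apply: (re_trans (v := y :: x :: v)).
  case: x H {IH} => a b; case: y => c d H.
  exact: (re_comm [::] v b d (H (c,d) (or_introl erefl))).
apply: (req_catl [:: y]); apply: IH => z Hz; apply: H; by right.
Qed.
Lemma req_comm u v : (forall x, List.In x u -> forall y, List.In y v -> E x.1 y.1) ->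
  req (u ++ v) (v ++ u).
Proof.
elim: u => [|x u IH] H /=; first by rewrite cats0; exact: re_refl.
apply: (re_trans (v := x :: v ++ u)).
  apply: (req_catl [:: x]); apply: IH => a Ha; apply: H; by right.
have H1 : forall y, List.In y v -> E x.1 y.1 by apply: H; left.
have := req_catr u (req_comm1 H1); by rewrite -catA.
Qed.
End Generic.
Arguments req_canc {V E} x.
Arguments req_canc' {V E} x.
Arguments req_invr {V E} w.
Arguments req_invl {V E} w.
Arguments req_elim_l {V E} u w v.
Arguments req_elim_r {V E} u w v.


Definition adjs (x y : tvert) : Prop := tadj_raw x y \/ tadj_raw y x.
Notation req := (raag_eq adjs).
Lemma adjs_sym x y : adjs x y -> adjs y x.
Proof. by case; [right|left]. Qed.

Section Erase.
Variables (s : seq (nat * nat)) (q : nat).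
Definition liftw (w : word (tree_vertex s q)) : word tvert := map (fun y => (val y.1, y.2)) w.
Definition erase_f (x : tvert * bool) : option (tree_vertex s q * bool) :=
  match insub x.1 with Some y => Some (y, x.2) | None => None end.
Definition erase (w : word tvert) : word (tree_vertex s q) := pmap erase_f w.

Lemma erase_cat u v : erase (u ++ v) = erase u ++ erase v.
Proof. exact: pmap_cat. Qed.
Lemma liftw_cat u v : liftw (u ++ v) = liftw u ++ liftw v.
Proof. exact: map_cat. Qed.
Lemma erase_liftw w : erase (liftw w) = w.
Proof.
elim: w => [|[y b] w IH] //=.
rewrite /erase /= /erase_f /=.
have -> : insub (sval y) = Some y by exact: valK.
by rewrite /= -{2}IH.
Qed.
Lemma req_erase u v : req u v -> raag_eq (@tree_adj s q) (erase u) (erase v).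
Proof.
elim=> {u v} [u|u v _ IH|u v x _ IH1 _ IH2|u v x b|u v x y b c Exy].
- exact: re_refl.
- exact: re_sym.
- exact: re_trans IH2.
- rewrite !erase_cat /= /erase_f /=.
  case: insubP => [y _ _|_] /=; last exact: re_refl.
  exact: re_cancel.
- rewrite !erase_cat /= /erase_f /=.
  case: insubP => [x' _ Ex|_] /=; case: insubP => [y' _ Ey|_] /=; try exact: re_refl.
  apply: re_comm; by rewrite /tree_adj Ex Ey.
Qed.
Lemma req_liftw u v : raag_eq (@tree_adj s q) u v -> req (liftw u) (liftw v).
Proof.
elim=> {u v} [u|u v _ IH|u v x _ IH1 _ IH2|u v x b|u v x y b c Exy].
- exact: re_refl.
- exact: re_sym.
- exact: re_trans IH2.
- rewrite !liftw_cat /=; exact: re_cancel.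
- rewrite !liftw_cat /=; exact: re_comm.
Qed.
End Erase.


Fixpoint decf (ks : seq nat) (g : nat) : nat * nat :=
  match ks with
  | [::] => (0, 0)
  | k :: ks' => if g < k then (0, g) else let ab := decf ks' (g - k) in (ab.1.+1, ab.2)
  end.
Definition gidxf (ks : seq nat) (P : nat * nat) := sumn (take P.1 ks) + P.2.

Lemma dec_gidx ks a b : a < size ks -> b < nth 0 ks a -> decf ks (gidxf ks (a, b)) = (a, b).
Proof.
rewrite /gidxf /=; elim: ks a => [|k ks IH] [|a] //= Ha Hb.
- by rewrite add0n Hb.
- rewrite -addnA ltnNge leq_addr /= addKn IH //.
Qed.
Lemma gidx_dec ks g : g < sumn ks ->
  let ab := decf ks g in [/\ ab.1 < size ks, ab.2 < nth 0 ks ab.1 & gidxf ks ab = g].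
Proof.
rewrite /gidxf; elim: ks g => [|k ks IH] g //= Hg.
case: ifP => Hgk /=; first by rewrite add0n.
have Hg' : g - k < sumn ks by rewrite ltn_subLR // leqNgt Hgk.
have [H1 H2 H3] := IH _ Hg'.
split => //; rewrite -addnA H3 subnKC // leqNgt Hgk //.
Qed.
Lemma gidx_lt ks a b : a < size ks -> b < nth 0 ks a -> gidxf ks (a, b) < sumn ks.
Proof.
rewrite /gidxf /=; elim: ks a => [|k ks IH] [|a] //= Ha Hb.
- by rewrite add0n ltn_addr.
- by rewrite -addnA ltn_add2l IH.
Qed.
Lemma gidx_pos ks a b : all (fun k => 0 < k) ks -> a < size ks ->
  (gidxf ks (a, b) == 0) = (a == 0) && (b == 0).
Proof.
rewrite /gidxf /=; case: ks a => [|k ks] [|a] //= /andP [Hk _] _.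
rewrite -addnA addn_eq0; move: Hk; by case: k.
Qed.


Section Main.
Variables (s : seq (nat * nat)) (p n : nat).
Hypothesis Hn : 0 < n.
Hypothesis Hpos : all (fun k => 0 < k) (map snd s).
Hypothesis Hs : 0 < size s.
Hypothesis Hm : 1 < sumn (map snd s).
Local Notation ks := (map snd s).
Local Notation m := (sumn (map snd s)).
Local Notation r := (n * p + (sumn (map snd s)).-1 * n.-1).
Local Notation gidx := (gidxf (map snd s)).

Definition isz (P : nat * nat) := (P.1 == 0) && (P.2 == 0).
Definition Xw P k : word tvert :=
  if isz P then [::] else [:: (THair (n * p + k * m.-1 + (gidx P).-1), true)].
Fixpoint pre P k : word tvert := match k with 0 => [::] | k'.+1 => pre P k' ++ Xw P k' end.
Definition gP P i : word tvert :=
  if i < n.-1 then Xw P i else winv (pre P n.-1) ++ [:: (TPivot P.1 P.2, true)].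
Definition succ i := i.+1 %% n.
Definition predm i := (i + n.-1) %% n.

Definition rho_l i (x : tvert * bool) : word tvert :=
  let (v, b) := x in
  if tvalid s p v then
    match v with
    | TCenter => [:: (TCenter, b)]
    | THair h => [:: (THair (i * p + h), b)]
    | TPivot a c => if b then gP (a, c) i else winv (gP (a, c) (predm i))
    | TLeaf a c _ => winv (pre (a, c) i) ++ (v, b) :: pre (a, c) i
    end
  else [::].
Definition sig_l i (x : tvert * bool) : nat :=
  let (v, b) := x in
  if tvalid s p v then
    match v with TPivot _ _ => if b then succ i else predm i | _ => i end
  else i.
Fixpoint rho_w i (w : word tvert) : word tvert :=
  match w with [::] => [::] | x :: w' => rho_l i x ++ rho_w (sig_l i x) w' end.
Fixpoint sig_w i (w : word tvert) : nat :=
  match w with [::] => i | x :: w' => sig_w (sig_l i x) w' end.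

Lemma succE i : i < n -> succ i = if i < n.-1 then i.+1 else 0.
Proof.
move=> Hi; rewrite /succ; case: ifP => H.
  by rewrite modn_small // -(prednK Hn) ltnS.
have -> : i.+1 = n. apply/eqP; rewrite eqn_leq Hi /=.
  by move: H; rewrite -(prednK Hn) ltnS => /negbT; rewrite -ltnNge.
exact: modnn.
Qed.
Lemma predmE i : i < n -> predm i = if i is j.+1 then j else n.-1.
Proof.
move=> Hi; rewrite /predm; case: i Hi => [|j] Hj.
  by rewrite add0n modn_small // prednK // ltnSn.
rewrite addSn -addnS prednK // modnDr modn_small //.
exact: ltnW.
Qed.
Lemma succ_lt i : i < n -> succ i < n.
Proof. move=> _; exact: ltn_pmod. Qed.
Lemma predm_lt i : i < n -> predm i < n.
Proof. move=> _; exact: ltn_pmod. Qed.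
Lemma predm_succ i : i < n -> predm (succ i) = i.
Proof.
move=> Hi; rewrite (predmE (succ_lt Hi)) (succE Hi).
case: ifP => // H; apply/eqP; rewrite eqn_leq; apply/andP; split.
  by rewrite leqNgt H.
by rewrite -ltnS prednK.
Qed.
Lemma succ_predm i : i < n -> succ (predm i) = i.
Proof.
move=> Hi; rewrite (succE (predm_lt Hi)) (predmE Hi).
case: i Hi => [|j] Hj.
  by rewrite ltnn.
have -> : j < n.-1 by rewrite -ltnS prednK.
done.
Qed.
Lemma sig_l_lt i x : i < n -> sig_l i x < n.
Proof.
case: x => v b Hi /=; case: (tvalid s p v) => //; case: v => //= *.
case: b; [exact: succ_lt | exact: predm_lt].
Qed.
Lemma sig_w_lt i w : i < n -> sig_w i w < n.
Proof. elim: w i => [|x w IH] i Hi //=; exact/IH/sig_l_lt. Qed.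
Lemma rho_w_cat i u v : rho_w i (u ++ v) = rho_w i u ++ rho_w (sig_w i u) v.
Proof. elim: u i => [|x u IH] i //=; by rewrite IH catA. Qed.
Lemma sig_w_cat i u v : sig_w i (u ++ v) = sig_w (sig_w i u) v.
Proof. elim: u i => [|x u IH] i //=. Qed.

Lemma winv_letter i x : i < n ->
  sig_l (sig_l i x) (flip x) = i /\ rho_l (sig_l i x) (flip x) = winv (rho_l i x).
Proof.
case: x => v b Hi; rewrite /flip /=.
case Hv: (tvalid s p v); last by [].
case: v Hv => [|h|a c|a c d] Hv //=.
- case: b => /=; first by rewrite predm_succ // winvK.
  by rewrite succ_predm // winvK.
- by split => //; rewrite winv_cat winv_cons winvK -catA.
Qed.
Lemma winv_word i w : i < n ->
  sig_w (sig_w i w) (winv w) = i /\ rho_w (sig_w i w) (winv w) = winv (rho_w i w).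
Proof.
elim: w i => [|x w IH] i Hi //=.
have Hi' := sig_l_lt x Hi.
have [IH1 IH2] := IH _ Hi'.
have [L1 L2] := winv_letter x Hi.
rewrite winv_cons sig_w_cat rho_w_cat IH1 IH2.
have -> : forall j y, sig_w j [:: y] = sig_l j y by [].
have -> : forall j y, rho_w j [:: y] = rho_l j y ++ [::] by [].
by rewrite L1 L2 cats0 winv_cat.
Qed.

Definition hpb (v : tvert) := match v with THair _ | TPivot _ _ => true | _ => false end.
Definition hpw (w : word tvert) := all (fun x => hpb x.1) w.
Lemma hpw_cat u v : hpw (u ++ v) = hpw u && hpw v.
Proof. exact: all_cat. Qed.
Lemma hpw_winv w : hpw (winv w) = hpw w.
Proof. by rewrite /hpw /winv all_rev all_map. Qed.
Lemma hpw_X P k : hpw (Xw P k).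
Proof. by rewrite /Xw; case: ifP. Qed.
Lemma hpw_pre P k : hpw (pre P k).
Proof. elim: k => //= k IH; by rewrite hpw_cat IH hpw_X. Qed.
Lemma hpw_gP P i : hpw (gP P i).
Proof. rewrite /gP; case: ifP => _; by rewrite ?hpw_X // hpw_cat hpw_winv hpw_pre. Qed.
Lemma allIn (T : Type) (f : T -> bool) w y : all f w -> List.In y w -> f y.
Proof. elim: w => //= z w IH /andP [Hz Hw] [<-|H] //; exact: IH. Qed.
Lemma center_comm b w : hpw w -> req ((TCenter, b) :: w) (w ++ [:: (TCenter, b)]).
Proof.
move=> Hw; apply: req_comm1 => y Hy; have := allIn Hw Hy.
case: y Hy => [[]] //= *; by left.
Qed.

Lemma leaf_key P d b i : i < n ->
  let L j := winv (pre P j) ++ (TLeaf P.1 P.2 d, b) :: pre P j in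
  req (L (succ i)) (winv (gP P i) ++ L i ++ gP P i).
Proof.
move=> Hi L; rewrite /L (succE Hi) /gP; case: ifP => H /=.
  rewrite winv_cat -!catA; exact: re_refl.
have Ei : i = n.-1.
  by apply/eqP; rewrite eqn_leq -ltnS prednK // Hi leqNgt H.
rewrite Ei winv_cat winvK -!catA /=.
set pr := pre P n.-1.
set l := (TLeaf P.1 P.2 d, b).
set z := (TPivot P.1 P.2, true).
apply: re_sym.
apply: (re_trans (v := [:: flip z] ++ pr ++ winv pr ++ [:: l] ++ pr ++ winv pr ++ [:: z])).
  exact: re_refl.
apply: (re_trans (req_elim_r _ _ _)).
apply: (re_trans (req_elim_r [:: flip z; l] _ _)).
apply: (re_trans (v := [:: l; flip z; z])).
  have := @re_comm _ adjs [::] [:: z] (TPivot P.1 P.2) (TLeaf P.1 P.2 d) false b.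
  apply; left => //.
have := @req_canc' _ adjs z; rewrite /=.
move/(req_catl [:: l]); by rewrite cats0.
Qed.

Lemma inval i v b : tvalid s p v = false -> rho_l i (v, b) = [::] /\ sig_l i (v, b) = i.
Proof. by move=> H; rewrite /= H. Qed.

Lemma comm_raw x y b c i : tadj_raw x y -> i < n ->
  sig_l (sig_l i (x, b)) (y, c) = sig_l (sig_l i (y, c)) (x, b) /\
  req (rho_l i (x, b) ++ rho_l (sig_l i (x, b)) (y, c))
      (rho_l i (y, c) ++ rho_l (sig_l i (y, c)) (x, b)).
Proof.
move=> Hxy Hi.
case Vx: (tvalid s p x); last first.
  have [R1 S1] := inval i b Vx; have [R2 S2] := inval (sig_l i (y, c)) b Vx.
  rewrite R1 S1 R2 S2 cats0; split => //; exact: re_refl.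
case Vy: (tvalid s p y); last first.
  have [R1 S1] := inval i c Vy; have [R2 S2] := inval (sig_l i (x, b)) c Vy.
  rewrite R1 S1 R2 S2 cats0; split => //; exact: re_refl.
case: x Hxy Vx => [|h|a a'|a a' d]; case: y Vy => [|h'|e e'|e e' d'] //= Vy Hxy Vx;
  rewrite ?Vx ?Vy.
- split => //; exact: (@re_comm _ adjs [::] [::] TCenter (THair (i*p+h')) b c (or_introl I)).
- split => //; apply: center_comm; case: c; by rewrite ?hpw_winv hpw_gP.
- case: Hxy => <- <-; split => //.
  case: b.
    have := leaf_key (a, a') d' c Hi; rewrite /= => K.
    apply: re_trans; first exact: (req_catl _ K).
    rewrite !catA -(cat0s (winv (pre _ i) ++ _)) -catA; rewrite -!catA.
    exact: (req_elim_r [::] _ _).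
  have Hj := predm_lt Hi.
  have := leaf_key (a, a') d' c Hj; rewrite /= succ_predm // => K.
  apply: re_sym; apply: re_trans; first exact: (req_catr _ K).
  rewrite -!catA; have := req_elim_r (winv (gP (a, a') (predm i)) ++ winv (pre (a, a') (predm i)) ++ (TLeaf a a' d', c) :: pre (a, a') (predm i)) (gP (a, a') (predm i)) [::].
  by rewrite !cats0 -!catA.
Qed.

Lemma comm_letter x y b c i : adjs x y -> i < n ->
  sig_l (sig_l i (x, b)) (y, c) = sig_l (sig_l i (y, c)) (x, b) /\
  req (rho_l i (x, b) ++ rho_l (sig_l i (x, b)) (y, c))
      (rho_l i (y, c) ++ rho_l (sig_l i (y, c)) (x, b)).
Proof.
case=> H Hi; first exact: comm_raw.
have [E1 E2] := comm_raw c b H Hi; split => //; exact: re_sym.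
Qed.

Lemma rho_resp u v : req u v -> forall i, i < n ->
  sig_w i u = sig_w i v /\ req (rho_w i u) (rho_w i v).
Proof.
elim=> {u v} [u|u v _ IH|u v x _ IH1 _ IH2|u v x b|u v x y b c Exy] i Hi.
- split => //; exact: re_refl.
- have [E1 E2] := IH i Hi; split => //; exact: re_sym.
- have [E1 E2] := IH1 i Hi; have [E3 E4] := IH2 i Hi; split; first by rewrite E1.
  exact: re_trans E4.
- rewrite !sig_w_cat !rho_w_cat; have Hj := sig_w_lt u Hi.
  have [L1 L2] := winv_letter (x, b) Hj; rewrite /flip /= in L1 L2.
  rewrite /= L1 L2; split => //; apply: req_catl.
  exact: (req_elim_r [::] _ _).
- rewrite !sig_w_cat !rho_w_cat; have Hj := sig_w_lt u Hi.
  have [E1 E2] := comm_letter b c Exy Hj.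
  have S2 : forall j x y w, sig_w j (x :: y :: w) = sig_w (sig_l (sig_l j x) y) w by [].
  have R2 : forall j x y w, rho_w j (x :: y :: w) =
    (rho_l j x ++ rho_l (sig_l j x) y) ++ rho_w (sig_l (sig_l j x) y) w by move=> *; rewrite /= catA.
  rewrite !S2 !R2 E1; split => //; apply: req_catl; exact: req_catr.
Qed.

Definition zp k : word tvert := nseq k (TPivot 0 0, true).
Definition phi_v (v : tvert) : word tvert :=
  if tvalid s r v then
    match v with
    | THair t =>
        if t < n * p then zp (t %/ p) ++ (THair (t %% p), true) :: winv (zp (t %/ p))
        else let t' := t - n * p in
             let P := decf ks (t' %% m.-1).+1 in
             zp (t' %/ m.-1) ++ (TPivot P.1 P.2, true) :: winv (zp (t' %/ m.-1).+1)
    | TPivot a c => nseq n (v, true)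
    | _ => [:: (v, true)]
    end
  else [::].
Definition phi_l (x : tvert * bool) := if x.2 then phi_v x.1 else winv (phi_v x.1).
Definition phi_raw (w : word tvert) : word tvert := flatten (map phi_l w).

Lemma phi_raw_cat u v : phi_raw (u ++ v) = phi_raw u ++ phi_raw v.
Proof. by rewrite /phi_raw map_cat flatten_cat. Qed.
Lemma phi_l_flip x : phi_l (flip x) = winv (phi_l x).
Proof. case: x => v [] //=; by rewrite /phi_l /= winvK. Qed.
Lemma phi_raw_winv w : phi_raw (winv w) = winv (phi_raw w).
Proof.
elim: w => [|x w IH] //.
rewrite winv_cons phi_raw_cat IH /= winv_cat; congr (_ ++ _).
by rewrite /phi_raw /= cats0 phi_l_flip.
Qed.
Lemma nseqSr (T : Type) k (x : T) : nseq k.+1 x = nseq k x ++ [:: x].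
Proof. by rewrite -addn1 nseqD. Qed.

Lemma In_winv (y : tvert * bool) w : List.In y (winv w) -> List.In (flip y) w.
Proof.
elim: w => [|x w IH] //=; rewrite winv_cons => H0.
case: (List.in_app_or _ _ _ H0) => [H|[H|//]].
  by right; apply: IH.
by left; rewrite -H /flip /= negbK; case: x {H H0}.
Qed.
Lemma comm_pred (f : tvert -> bool) x w :
  (forall v, f v -> adjs x.1 v) -> all (fun y => f y.1) w -> req (x :: w) (w ++ [:: x]).
Proof. move=> Hf Hw; apply: req_comm1 => y Hy; apply: Hf; exact: (allIn Hw Hy). Qed.
Lemma all_winv (f : tvert -> bool) w : all (fun y => f y.1) (winv w) = all (fun y => f y.1) w.
Proof. by rewrite /winv all_rev all_map. Qed.

Definition isP a c v := match v with TPivot a' c' => (a' == a) && (c' == c) | _ => false end.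

Lemma hpw_zp k : hpw (zp k).
Proof. by rewrite /hpw /zp all_nseq orbT. Qed.
Lemma hpw_cons x w : hpw (x :: w) = hpb x.1 && hpw w.
Proof. by []. Qed.
Lemma hpw_phi_hair t : hpw (phi_v (THair t)).
Proof.
rewrite /phi_v; case: ifP => // _; case: ifP => _;
by rewrite hpw_cat hpw_cons hpw_winv !hpw_zp.
Qed.
Lemma hpw_phi_piv a c : hpw (phi_v (TPivot a c)).
Proof. rewrite /phi_v; case: ifP => // _; by rewrite /hpw all_nseq orbT. Qed.

Lemma phi_comm_raw x y b c : tadj_raw x y ->
  req (phi_l (x, b) ++ phi_l (y, c)) (phi_l (y, c) ++ phi_l (x, b)).
Proof.
move=> H.
have Ec : forall b', phi_l (TCenter, b') = if tvalid s r TCenter then [:: (TCenter, b')] else [::].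
  by case; rewrite /phi_l /phi_v /=.
case: x H => [|h|a a'|a a' d]; case: y => [|h'|e e'|e e' d'] //= H.
- rewrite Ec /=; apply: center_comm; rewrite /phi_l /=; case: c; by rewrite ?hpw_winv hpw_phi_hair.
- rewrite Ec /=; apply: center_comm; rewrite /phi_l /=; case: c; by rewrite ?hpw_winv hpw_phi_piv.
- case: H => <- <-.
  have El : phi_l (TLeaf a a' d', c) = if tvalid s r (TLeaf a a' d') then [:: (TLeaf a a' d', c)] else [::].
    by case: c; rewrite /phi_l /phi_v /=; case: ifP.
  rewrite El; case: ifP => _; last by rewrite cats0; exact: re_refl.
  apply: re_sym; apply: (comm_pred (f := isP a a')).
    by case=> // x1 x2 /= /andP [/eqP -> /eqP ->]; right.
  rewrite /phi_l /=; case: b; rewrite ?all_winv /phi_v; case: ifP => //= _;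
  by rewrite all_nseq /= !eqxx orbT.
Qed.

Lemma phi_resp u v : req u v -> req (phi_raw u) (phi_raw v).
Proof.
elim=> {u v} [u|u v _ IH|u v x _ IH1 _ IH2|u v x b|u v x y b c Exy].
- exact: re_refl.
- exact: re_sym.
- exact: re_trans IH2.
- rewrite !phi_raw_cat; apply: req_catl.
  have -> : phi_raw [:: (x, b), (x, ~~ b) & v] = phi_l (x, b) ++ phi_l (flip (x, b)) ++ phi_raw v.
    by rewrite /phi_raw /= catA.
  rewrite phi_l_flip; exact: (req_elim_r [::] _ _).
- rewrite !phi_raw_cat; apply: req_catl.
  have E : forall x y w, phi_raw (x :: y :: w) = (phi_l x ++ phi_l y) ++ phi_raw w.
    by move=> *; rewrite /phi_raw /= catA.
  rewrite !E; apply: req_catr.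
  case: Exy => H; first exact: phi_comm_raw.
  apply: re_sym; exact: phi_comm_raw.
Qed.

Lemma valid_piv q a c : tvalid s q (TPivot a c) = (a < size ks) && (c < nth 0 ks a).
Proof.
rewrite /= size_map; case: ltnP => //= Ha.
by rewrite (nth_map (0, 0)).
Qed.
Lemma z_valid q : tvalid s q (TPivot 0 0).
Proof.
rewrite valid_piv size_map Hs /=; move: Hpos Hs; rewrite -(size_map snd).
by case: (map snd s) => //= k ks' /andP [].
Qed.
Lemma isz_gidx a c : a < size ks -> (gidx (a, c) == 0) = isz (a, c).
Proof. move=> Ha; exact: gidx_pos. Qed.

Lemma rho_w1 i x : rho_w i [:: x] = rho_l i x.
Proof. by rewrite /= cats0. Qed.
Lemma sig_w1 i x : sig_w i [:: x] = sig_l i x.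
Proof. by []. Qed.
Lemma rho_piv i a c b : tvalid s p (TPivot a c) ->
  rho_l i (TPivot a c, b) = if b then gP (a, c) i else winv (gP (a, c) (predm i)).
Proof. by move=> H; rewrite /rho_l H. Qed.
Lemma sig_piv i a c b : tvalid s p (TPivot a c) ->
  sig_l i (TPivot a c, b) = if b then succ i else predm i.
Proof. by move=> H; rewrite /sig_l H. Qed.
Lemma rho_hair i h b : h < p -> rho_l i (THair h, b) = [:: (THair (i * p + h), b)].
Proof. by move=> H; rewrite /rho_l /= H. Qed.
Lemma sig_hair i h b : sig_l i (THair h, b) = i.
Proof. by rewrite /sig_l; case: ifP. Qed.
Lemma rho_leaf i a c d b : tvalid s p (TLeaf a c d) ->
  rho_l i (TLeaf a c d, b) = winv (pre (a, c) i) ++ (TLeaf a c d, b) :: pre (a, c) i.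
Proof. by move=> H; rewrite /rho_l H. Qed.
Lemma sig_leaf i a c d b : sig_l i (TLeaf a c d, b) = i.
Proof. by rewrite /sig_l; case: ifP. Qed.
Lemma rho_center i b : rho_l i (TCenter, b) = [:: (TCenter, b)].
Proof. by []. Qed.
Lemma sig_center i b : sig_l i (TCenter, b) = i.
Proof. by []. Qed.

Lemma pivot_run a c : tvalid s p (TPivot a c) -> forall k, k <= n.-1 ->
  sig_w 0 (nseq k (TPivot a c, true)) = k /\ rho_w 0 (nseq k (TPivot a c, true)) = pre (a, c) k.
Proof.
move=> Hv; elim=> [|k IH] Hk //.
have [S1 R1] := IH (ltnW Hk).
rewrite nseqSr sig_w_cat rho_w_cat S1 R1 sig_w1 rho_w1 sig_piv // rho_piv // /succ modn_small; last first.
  by rewrite -(prednK Hn) ltnS.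
split => //; rewrite /gP Hk //.
Qed.
Lemma zp_run k : k <= n.-1 -> sig_w 0 (zp k) = k /\ rho_w 0 (zp k) = [::].
Proof.
move=> Hk; have [S1 R1] := pivot_run (z_valid p) Hk; split => //; rewrite /zp R1.
by elim: k {Hk S1 R1} => //= k ->; rewrite /Xw.
Qed.
Lemma zp_back k : k <= n.-1 -> sig_w k (winv (zp k)) = 0 /\ rho_w k (winv (zp k)) = [::].
Proof.
move=> Hk; have [S1 R1] := zp_run Hk.
have [S2 R2] := winv_word (zp k) Hn; rewrite S1 in S2 R2; by rewrite S2 R2 R1.
Qed.
Lemma leq_pn : n.-1 < n. Proof. by rewrite prednK. Qed.

Lemma rpv_hair1 t : t < n * p ->
  sig_w 0 (zp (t %/ p) ++ (THair (t %% p), true) :: winv (zp (t %/ p))) = 0 /\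
  req (rho_w 0 (zp (t %/ p) ++ (THair (t %% p), true) :: winv (zp (t %/ p)))) [:: (THair t, true)].
Proof.
move=> Ht.
have Hp : 0 < p by move: Ht; case: (p) => //; rewrite muln0.
have Hi : t %/ p <= n.-1 by rewrite -ltnS prednK // ltn_divLR.
have [S1 R1] := zp_run Hi; have [S2 R2] := zp_back Hi.
rewrite -cat1s sig_w_cat rho_w_cat sig_w_cat rho_w_cat S1 R1 sig_w1 rho_w1 sig_hair.
rewrite S2 R2 rho_hair ?ltn_pmod // -divn_eq cats0.
split => //; exact: re_refl.
Qed.
Lemma Hm1 : 0 < m.-1.
Proof. by rewrite -ltnS prednK // ltnW. Qed.
Lemma rpv_hair2 t : n * p <= t -> t < r ->
  let t' := t - n * p in let P := decf ks (t' %% m.-1).+1 in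
  sig_w 0 (zp (t' %/ m.-1) ++ (TPivot P.1 P.2, true) :: winv (zp (t' %/ m.-1).+1)) = 0 /\
  req (rho_w 0 (zp (t' %/ m.-1) ++ (TPivot P.1 P.2, true) :: winv (zp (t' %/ m.-1).+1)))
      [:: (THair t, true)].
Proof.
move=> Ht1 Ht2 t' P.
have Ht' : t' < m.-1 * n.-1 by rewrite /t' ltn_subLR.
have Hk : t' %/ m.-1 < n.-1 by rewrite ltn_divLR ?Hm1 // mulnC.
have Hg : (t' %% m.-1).+1 < m by rewrite -(prednK (ltnW Hm)) ltnS ltn_pmod ?Hm1.
have [G1 G2 G3] := gidx_dec Hg.
rewrite -/P in G1 G2 G3.
have HvP : tvalid s p (TPivot P.1 P.2) by rewrite valid_piv G1 G2.
have HnzP : ~~ isz P.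
  by rewrite [P]surjective_pairing -isz_gidx // -surjective_pairing G3.
have [S1 R1] := zp_run (ltnW Hk).
have [S2 R2] := zp_back Hk.
have Hsk : succ (t' %/ m.-1) = (t' %/ m.-1).+1.
  by rewrite /succ modn_small // -(prednK Hn) ltnS.
rewrite -cat1s sig_w_cat rho_w_cat sig_w_cat rho_w_cat S1 R1 sig_w1 rho_w1.
rewrite sig_piv // rho_piv // Hsk S2 R2 /gP Hk /Xw -surjective_pairing (negbTE HnzP) cats0.
rewrite G3 /= -addnA -divn_eq /t' subnKC //.
split => //; exact: re_refl.
Qed.
Lemma rpv_piv a c : tvalid s p (TPivot a c) ->
  sig_w 0 (nseq n (TPivot a c, true)) = 0 /\
  req (rho_w 0 (nseq n (TPivot a c, true))) [:: (TPivot a c, true)].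
Proof.
move=> HvS.
have [S1 R1] := pivot_run HvS (leqnn n.-1).
rewrite -(prednK Hn) nseqSr sig_w_cat rho_w_cat S1 R1 sig_w1 rho_w1 sig_piv // rho_piv //.
rewrite /gP ltnn /succ prednK // modnn.
split => //; exact: (req_elim_r [::] _ _).
Qed.
Lemma rho_phi_v v : tvalid s r v ->
  sig_w 0 (phi_v v) = 0 /\ req (rho_w 0 (phi_v v)) [:: (v, true)].
Proof.
move=> Hv; rewrite /phi_v Hv.
case: v Hv => [|t|a c|a c d] Hv.
- split => //; exact: re_refl.
- case: ifP => Ht; first exact: rpv_hair1.
  apply: rpv_hair2 => //; by rewrite leqNgt Ht.
- exact: rpv_piv.
- rewrite rho_w1 sig_w1 sig_leaf rho_leaf //; split => //; exact: re_refl.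
Qed.
Lemma rho_phi_l x : tvalid s r x.1 ->
  sig_w 0 (phi_l x) = 0 /\ req (rho_w 0 (phi_l x)) [:: x].
Proof.
case: x => v [] Hv; rewrite /phi_l /=; first exact: rho_phi_v.
have [S1 R1] := rho_phi_v Hv.
have [S2 R2] := winv_word (phi_v v) Hn.
rewrite S1 in S2 R2; rewrite S2 R2; split => //.
have := req_winv adjs_sym R1; by rewrite /winv /=.
Qed.
Lemma rho_phi u : all (fun x => tvalid s r x.1) u ->
  sig_w 0 (phi_raw u) = 0 /\ req (rho_w 0 (phi_raw u)) u.
Proof.
elim: u => [|x u IH] /=; first by split => //; exact: re_refl.
case/andP => Hx Hu; have [S1 R1] := IH Hu; have [S2 R2] := rho_phi_l Hx.
have -> : phi_raw (x :: u) = phi_l x ++ phi_raw u by [].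
rewrite sig_w_cat rho_w_cat S2 S1; split => //.
exact: (req_cat R2 R1).
Qed.
Lemma phi_raw1 x : phi_raw [:: x] = phi_l x.
Proof. by rewrite /phi_raw /= cats0. Qed.
Lemma phi_hairR i h b : i < n -> h < p ->
  phi_raw [:: (THair (i * p + h), b)] = zp i ++ (THair h, b) :: winv (zp i).
Proof.
move=> Hi Hh; have Hp : 0 < p by case: (p) Hh.
have Hlt : i * p + h < n * p.
  apply: (@leq_trans (i.+1 * p)); first by rewrite mulSn addnC ltn_add2r.
  by rewrite leq_mul2r Hi orbT.
have Hv : tvalid s r (THair (i * p + h)) by rewrite /= (leq_trans Hlt) // leq_addr.
rewrite phi_raw1 /phi_l /phi_v Hv /= Hlt divnMDl // (divn_small Hh) addn0 modnMDl (modn_small Hh).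
case: b => //=; by rewrite winv_cat winv_cons winvK -catA.
Qed.
Lemma phi_X a c k : tvalid s p (TPivot a c) -> ~~ isz (a, c) -> k < n.-1 ->
  phi_raw (Xw (a, c) k) = zp k ++ (TPivot a c, true) :: winv (zp k.+1).
Proof.
move=> Hv Hz Hk.
have Ha : a < size ks by move: Hv; rewrite valid_piv => /andP [].
have Hc : c < nth 0 ks a by move: Hv; rewrite valid_piv => /andP [].
have Hg1 : 0 < gidx (a, c) by rewrite lt0n isz_gidx.
have Hg2 : gidx (a, c) < m by exact: gidx_lt.
have Hg3 : (gidx (a, c)).-1 < m.-1 by rewrite -subn1 -(subn1 m) ltn_sub2r // (leq_trans _ Hg2).
have Hlt : k * m.-1 + (gidx (a, c)).-1 < m.-1 * n.-1.
  apply: (@leq_trans (k.+1 * m.-1)); first by rewrite mulSn addnC ltn_add2r.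
  by rewrite mulnC leq_mul2l Hk orbT.
have Hv' : tvalid s r (THair (n * p + k * m.-1 + (gidx (a, c)).-1)).
  by rewrite /= -addnA ltn_add2l.
rewrite /Xw (negbTE Hz) phi_raw1 /phi_l /= /phi_v Hv'.
rewrite -addnA ltnNge leq_addr /= addKn divnMDl ?Hm1 // (divn_small Hg3) addn0.
by rewrite modnMDl (modn_small Hg3) prednK // dec_gidx.
Qed.
Lemma phi_pre a c k : tvalid s p (TPivot a c) -> k <= n.-1 ->
  req (phi_raw (pre (a, c) k)) (nseq k (TPivot a c, true) ++ winv (zp k)).
Proof.
move=> Hv; elim: k => [|k IH] Hk; first exact: re_refl.
have IH' := IH (ltnW Hk).
have -> : pre (a, c) k.+1 = pre (a, c) k ++ Xw (a, c) k by [].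
rewrite phi_raw_cat.
case Hz: (isz (a, c)).
  move: Hz; rewrite /isz /= => /andP [/eqP Ea /eqP Ec]; subst a c.
  have -> : Xw (0, 0) k = [::] by [].
  rewrite cats0.
  apply: (re_trans IH'); apply: (re_trans (v := [::])); first exact: req_invr.
  apply: re_sym; exact: (req_invr (nseq k.+1 (TPivot 0 0, true))).
rewrite phi_X ?Hz //.
apply: (re_trans (req_catr _ IH')).
rewrite nseqSr -!catA; apply: req_catl.
exact: (req_elim_l [::] _ _).
Qed.
Lemma group_move (a b c d : word tvert) : req (a ++ b) (c ++ d) -> req (winv c ++ a) (d ++ winv b).
Proof.
move=> H.
apply: (re_trans (v := winv c ++ a ++ b ++ winv b)).
  apply: re_sym; have := req_elim_r (winv c ++ a) b [::]; by rewrite !cats0 -!catA.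
apply: (re_trans (v := winv c ++ (c ++ d) ++ winv b)).
  rewrite (catA a b); apply: req_catl; apply: req_catr; exact: H.
rewrite -catA; exact: (req_elim_l [::] _ _).
Qed.
Lemma phi_piv1 a c : tvalid s p (TPivot a c) ->
  phi_raw [:: (TPivot a c, true)] = nseq n (TPivot a c, true).
Proof. move=> Hv; rewrite phi_raw1 /phi_l /phi_v /=; by move: Hv => /= ->. Qed.

Lemma coset_piv_true a c i : tvalid s p (TPivot a c) -> i < n ->
  req (zp i ++ [:: (TPivot a c, true)]) (phi_raw (gP (a, c) i) ++ zp (succ i)).
Proof.
move=> Hv Hi; rewrite (succE Hi) /gP; case: ifP => Hi'.
  case Hz: (isz (a, c)).
    move: Hz; rewrite /isz /= => /andP [/eqP Ea /eqP Ec]; subst a c.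
    have -> : Xw (0, 0) i = [::] by [].
    rewrite /zp -nseqSr; exact: re_refl.
  rewrite phi_X ?Hz //.
  apply: re_sym; have := req_elim_l (zp i ++ [:: (TPivot a c, true)]) (zp i.+1) [::].
  by rewrite !cats0 -!catA.
have Ei : i = n.-1.
  by apply/eqP; rewrite eqn_leq -ltnS prednK // Hi leqNgt Hi'.
subst i.
rewrite phi_raw_cat phi_raw_winv phi_piv1 // cats0.
have H1 := req_winv adjs_sym (phi_pre Hv (leqnn n.-1)).
rewrite winv_cat winvK in H1.
apply: re_sym; apply: (re_trans (req_catr _ H1)).
rewrite -(prednK Hn) nseqSr prednK // -!catA; apply: req_catl.
exact: (req_elim_l [::] _ _).
Qed.

Lemma coset_l v b i : tvalid s p v -> i < n ->
  req (zp i ++ [:: (v, b)]) (phi_raw (rho_l i (v, b)) ++ zp (sig_l i (v, b))).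
Proof.
move=> Hv Hi; case: v Hv => [|h|a c|a c d] Hv.
- rewrite rho_center sig_center.
  have -> : phi_raw [:: (TCenter, b)] = [:: (TCenter, b)] by case: b.
  apply: re_sym; apply: center_comm; exact: hpw_zp.
- rewrite rho_hair // sig_hair phi_hairR //.
  apply: re_sym; have := req_elim_l (zp i ++ [:: (THair h, b)]) (zp i) [::].
  by rewrite !cats0 -!catA.
- rewrite rho_piv // sig_piv //; case: b; first exact: coset_piv_true.
  have Hj := predm_lt Hi.
  have := coset_piv_true Hv Hj; rewrite succ_predm // => /group_move H.
  rewrite phi_raw_winv; apply: re_sym; exact: H.
- rewrite rho_leaf // sig_leaf.
  have Hl : phi_raw [:: (TLeaf a c d, b)] = [:: (TLeaf a c d, b)].
    rewrite phi_raw1 /phi_l /phi_v; have -> : tvalid s r (TLeaf a c d) by move: Hv.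
    by case: b.
  have HvP : tvalid s p (TPivot a c) by move: Hv => /= /and3P [-> ->].
  have Hi' : i <= n.-1 by rewrite -ltnS prednK.
  have H1 := phi_pre HvP Hi'.
  have H2 := req_winv adjs_sym H1; rewrite winv_cat winvK in H2.
  have -> : forall (x : tvert * bool) u, u ++ x :: pre (a, c) i = u ++ [:: x] ++ pre (a, c) i by [].
  rewrite !phi_raw_cat Hl phi_raw_winv.
  set Q := nseq i (TPivot a c, true) in H1 H2.
  set Z := zp i in H1 H2 *.
  set l := (TLeaf a c d, b).
  apply: re_sym.
  apply: (re_trans (v := (Z ++ winv Q ++ [:: l] ++ Q ++ winv Z) ++ Z)).
    apply: req_catr; have := req_cat H2 (req_catl [:: l] H1); by rewrite -!catA.
  rewrite -!catA; apply: (re_trans (v := Z ++ winv Q ++ [:: l] ++ Q)).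
    have := req_elim_l (Z ++ winv Q ++ [:: l] ++ Q) Z [::]; by rewrite !cats0 -!catA.
  apply: req_catl; apply: (re_trans (v := winv Q ++ Q ++ [:: l])).
    apply: req_catl; apply: (comm_pred (f := isP a c)).
      by case=> // x1 x2 /= /andP [/eqP -> /eqP ->]; right.
    by rewrite /Q all_nseq /= !eqxx orbT.
  have := req_elim_l [::] Q [:: l]; by [].
Qed.

Lemma coset_w w i : all (fun x => tvalid s p x.1) w -> i < n ->
  req (zp i ++ w) (phi_raw (rho_w i w) ++ zp (sig_w i w)).
Proof.
elim: w i => [|[v b] w IH] i /=; first by move=> _ _; rewrite cats0; exact: re_refl.
case/andP => Hv Hw Hi.
have Hj := sig_l_lt (v, b) Hi.
apply: (re_trans (v := (zp i ++ [:: (v, b)]) ++ w)); first by rewrite -catA; exact: re_refl.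
apply: (re_trans (req_catr _ (coset_l b Hv Hi))).
rewrite phi_raw_cat -!catA; apply: req_catl; exact: IH.
Qed.
Lemma liftw_valid q (w : word (tree_vertex s q)) : all (fun x => tvalid s q x.1) (liftw w).
Proof. elim: w => [|[y b] w IH] //=; by rewrite IH (valP y). Qed.

Lemma erase_cons q x w : erase s q (x :: w) =
  if insub x.1 is Some y then (y, x.2) :: erase s q w else erase s q w.
Proof. by rewrite /erase /= /erase_f; case: insub. Qed.

Lemma rho_erase w i : rho_w i (liftw (erase s p w)) = rho_w i w /\ sig_w i (liftw (erase s p w)) = sig_w i w.
Proof.
elim: w i => [|[v b] w IH] i //.
have E1 : rho_w i ((v, b) :: w) = rho_l i (v, b) ++ rho_w (sig_l i (v, b)) w by [].
have E2 : sig_w i ((v, b) :: w) = sig_w (sig_l i (v, b)) w by [].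
rewrite erase_cons E1 E2.
case: insubP => [y Hy Ey|Hy].
  have E3 : liftw ((y, b) :: erase s p w) = (v, b) :: liftw (erase s p w) by rewrite /= Ey.
  rewrite E3.
  have [R1 S1] := IH (sig_l i (v, b)); by rewrite -R1 -S1.
have [R2 S2] := inval i b (negbTE Hy).
rewrite R2 S2; exact: IH.
Qed.
Lemma phi_erase w : phi_raw (liftw (erase s r w)) = phi_raw w.
Proof.
elim: w => [|[v b] w IH] //.
have E1 : phi_raw ((v, b) :: w) = phi_l (v, b) ++ phi_raw w by [].
rewrite erase_cons E1.
case: insubP => [y Hy Ey|Hy].
  have E3 : liftw ((y, b) :: erase s r w) = (v, b) :: liftw (erase s r w) by rewrite /= Ey.
  by rewrite E3 -IH.
rewrite IH.
by rewrite /phi_l /phi_v /= (negbTE Hy); case: (b).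
Qed.

Lemma In_map_iota (T : Type) (f : nat -> T) len a k : a <= k < a + len ->
  List.In (f k) (map f (iota a len)).
Proof.
elim: len a => [|len IH] a /andP [H1 H2]; first by rewrite addn0 in H2; move: (leq_ltn_trans H1 H2); rewrite ltnn.
rewrite /=; case: (ltngtP a k) => Hak.
- right; apply: IH; by rewrite Hak addSnnS.
- by move: (leq_ltn_trans H1 Hak); rewrite ltnn.
- by left; rewrite Hak.
Qed.

Lemma embed : exists phi : word (tree_vertex s r) -> word (tree_vertex s p),
  fi_embedding (@tree_adj s r) (@tree_adj s p) phi.
Proof.
exists (fun u => erase s p (phi_raw (liftw u))).
split; [|split; [|split]].
- move=> u v H; apply: req_erase; apply: phi_resp; exact: req_liftw.
- move=> u v; rewrite liftw_cat phi_raw_cat erase_cat; exact: re_refl.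
- move=> u v H.
  have H1 := req_liftw H.
  have [S1 R1] := rho_resp H1 Hn.
  have [Ru Su] := rho_erase (phi_raw (liftw u)) 0.
  have [Rv Sv] := rho_erase (phi_raw (liftw v)) 0.
  rewrite Ru Rv in R1.
  have [_ Hu] := rho_phi (liftw_valid u).
  have [_ Hv] := rho_phi (liftw_valid v).
  have H2 : req (liftw u) (liftw v).
    apply: re_trans (re_sym Hu) _; exact: re_trans R1 Hv.
  have := req_erase s r H2; by rewrite !erase_liftw.
- exists (map (fun k => erase s p (winv (zp k))) (iota 0 n)) => w.
  set w1 := winv (liftw w).
  have Hw1 : all (fun x => tvalid s p x.1) w1 by rewrite /w1 all_winv liftw_valid.
  have H := coset_w Hw1 Hn.
  set sg := sig_w 0 w1 in H.
  have Hsg : sg < n by exact: sig_w_lt.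
  exists (erase s p (winv (zp sg))); split.
    by apply: (In_map_iota (fun k => erase s p (winv (zp k)))); rewrite add0n Hsg.
  exists (erase s r (winv (rho_w 0 w1))).
  have H2 := req_winv adjs_sym H.
  rewrite /w1 winvK winv_cat -phi_raw_winv -(phi_erase (winv (rho_w 0 w1))) in H2.
  have := req_erase s p H2; by rewrite erase_liftw erase_cat.
Qed.
End Main.


From mathcomp Require Import zify.
Lemma ar_eq (p q M : nat) : 1 < M ->
  (p + M.-1) * q + M.-1 * (p + M.-1).-1 = (q + M.-1) * p + M.-1 * (q + M.-1).-1.
Proof. move=> H; nia. Qed.

Theorem mainTheorem7 (s : seq (nat * nat)) (p q : nat) :
  diam4_data s ->
  exists r : nat,
    (exists phi : word (tree_vertex s r) -> word (tree_vertex s q),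
        fi_embedding (@tree_adj s r) (@tree_adj s q) phi) /\
    (exists psi : word (tree_vertex s r) -> word (tree_vertex s p),
        fi_embedding (@tree_adj s r) (@tree_adj s p) psi).
Proof.
move=> /and3P [Hall _ Hsz].
have Hpos : all (fun k => 0 < k) (map snd s).
  rewrite all_map; apply: sub_all Hall => dk /andP [_ H]; exact: H.
have Hs : 0 < size s by case: (s) Hsz.
have Hm : 1 < sumn (map snd s).
  move: Hpos Hsz {Hall Hs}; case: s => [|[d1 k1] [|[d2 k2] t]] //=.
    move=> _ H; lia.
  move=> /and3P [H1 H2 _] _; lia.
set M := sumn (map snd s) in Hm.
exists ((p + M.-1) * q + M.-1 * (p + M.-1).-1); split.
  have Hn : 0 < p + M.-1 by lia.
  exact: (embed q Hn Hpos Hs Hm).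
rewrite ar_eq //.
have Hn : 0 < q + M.-1 by lia.
exact: (embed p Hn Hpos Hs Hm).
Qed.
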